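(* Let $K$ be a field of characteristic zero and $m>1$. Then the ring $K(\!(\mathbf{t})\!)^\circ=\{q\in K(\!(\mathbf{t})\!):\operatorname{trop}(q)\le1\}$ is not Noetherian.
   Context: $\mathbf{t}=(t_1,\dots,t_m)$, $K(\!(\mathbf{t})\!)=\operatorname{Frac}K[\![\mathbf{t}]\!]$. $V\mathbb{B}[\mathbf{t}]$ is the semiring of subsets of $\mathbb{N}^m$ equal to the vertex set of their Newton polyhedron $\operatorname{conv}(\cdot)+\mathbb{R}^m_{\ge0}$, with $a\oplus b$ = vertices of the Newton polyhedron of $a\cup b$ and $a\odot b$ = vertices of that of $a+b$; $V\mathbb{B}(\mathbf{t})$ is its fraction semifield, ordered by $a/b\le c/d$ iff $a\odot d\oplus b\odot c=b\odot c$. $\operatorname{trop}(f)$ is the vertex set of the Newton polyhedron of $\operatorname{Supp}(f)$ for $f\in K[\![\mathbf{t}]\!]$, and $\operatorname{trop}(f/g)=\operatorname{trop}(f)/\operatorname{trop}(g)$. *)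

(* Defs.v *)
From Stdlib Require Import Rdefinitions.
From HB Require Import structures.
From mathcomp Require Import all_boot all_order all_algebra.
From mathcomp Require Import Rstruct.

Set Implicit Arguments.
Unset Strict Implicit.
Unset Printing Implicit Defensive.

Import Order.TTheory GRing.Theory Num.Theory.
Local Open Scope ring_scope.

Definition mon (m : nat) := {ffun 'I_m -> nat}.

(* Subtraction of exponents (used only when a <= c pointwise). *)
Definition mon_sub m (c a : mon m) : mon m := [ffun i => (c i - a i)%N].

Definition mon_bnd m (c : mon m) : nat := (\max_(i < m) c i).+1.
Definition mon_divs m (c : mon m) : seq (mon m) :=
  [seq a : mon m <- [seq ([ffun i => nat_of_ord (b i)] : mon m)
             | b : {ffun 'I_m -> 'I_(mon_bnd c)}]
   | [forall i, (a i <= c i)%N]].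

Definition series (K : fieldType) (m : nat) := mon m -> K.

Section Series.
Variables (K : fieldType) (m : nat).

Definition ser_add (f g : series K m) : series K m := fun c => f c + g c.
Definition ser_mul (f g : series K m) : series K m :=
  fun c => \sum_(a <- mon_divs c) f a * g (mon_sub c a).
Definition ser_zero : series K m := fun _ => 0.
Definition ser_one : series K m := fun c => if [forall i, c i == 0%N] then 1 else 0.
Definition ser_nonzero (f : series K m) : Prop := exists c, f c != 0.
Definition supp (f : series K m) : mon m -> Prop := fun c => f c != 0.

End Series.
Arguments ser_zero : clear implicits.
Arguments ser_one : clear implicits.

Definition emb m (v : mon m) : 'I_m -> R := fun i => (v i)%:R.

Definition in_newton m (S : mon m -> Prop) (x : 'I_m -> R) : Prop :=
  exists (n : nat) (lam : 'I_n -> R) (pts : 'I_n -> mon m),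
    (forall k, S (pts k)) /\ (forall k, 0 <= lam k) /\
    \sum_(k < n) lam k = 1 /\
    (forall i, \sum_(k < n) lam k * (pts k i)%:R <= x i).

Definition is_vertex m (S : mon m -> Prop) (x : 'I_m -> R) : Prop :=
  in_newton S x /\
  forall (y z : 'I_m -> R) (t : R), in_newton S y -> in_newton S z ->
    0 < t -> t < 1 -> (forall i, x i = t * y i + (1 - t) * z i) ->
    forall i, y i = z i.

(* The vertex set of the Newton polyhedron of S, as a subset of N^m
   (all vertices are points of S, hence lattice points). *)
Definition vert m (S : mon m -> Prop) : mon m -> Prop :=
  fun v => is_vertex S (emb v).

Definition seteq m (A B : mon m -> Prop) : Prop := forall v, A v <-> B v.

Definition vb_add m (a b : mon m -> Prop) : mon m -> Prop :=
  vert (fun v => a v \/ b v).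
Definition vb_mul m (a b : mon m -> Prop) : mon m -> Prop :=
  vert (fun v => exists x y, a x /\ b y /\ forall i, v i = (x i + y i)%N).
Definition vb_one (m : nat) : mon m -> Prop := fun v => forall i, v i = 0%N.
Arguments vb_one : clear implicits.

(* The order of the fraction semifield VB(t): a/b <= c/d iff
   a (.) d (+) b (.) c = b (.) c *)
Definition vb_le m (a b c d : mon m -> Prop) : Prop :=
  seteq (vb_add (vb_mul a d) (vb_mul b c)) (vb_mul b c).

Definition trop (K : fieldType) m (f : series K m) : mon m -> Prop := vert (supp f).

Section Frac.
Variables (K : fieldType) (m : nat).

Definition frac := (series K m * series K m)%type.

Definition frac_wf (q : frac) : Prop := ser_nonzero q.2.
Definition frac_eq (q r : frac) : Prop :=
  forall c, ser_mul q.1 r.2 c = ser_mul r.1 q.2 c.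
Definition frac_add (q r : frac) : frac :=
  (ser_add (ser_mul q.1 r.2) (ser_mul r.1 q.2), ser_mul q.2 r.2).
Definition frac_mul (q r : frac) : frac := (ser_mul q.1 r.1, ser_mul q.2 r.2).
Definition frac_zero : frac := (ser_zero K m, ser_one K m).

(* q belongs to K((t))^o = { q : trop(q) <= 1 },
   with trop(f/g) = trop(f)/trop(g) and 1 = {0}/{0}. *)
Definition in_circ (q : frac) : Prop :=
  frac_wf q /\ vb_le (trop q.1) (trop q.2) (vb_one m) (vb_one m).

Definition is_ideal (I : frac -> Prop) : Prop :=
  [/\ (forall q, I q -> in_circ q),
      (forall q r, I q -> frac_wf r -> frac_eq q r -> I r),
      I frac_zero,
      (forall q r, I q -> I r -> I (frac_add q r)) &
      (forall a q, in_circ a -> I q -> I (frac_mul a q))].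

Definition finitely_generated (I : frac -> Prop) : Prop :=
  exists (n : nat) (gens : 'I_n -> frac),
    (forall k, I (gens k)) /\
    forall q, I q -> exists coef : 'I_n -> frac,
      (forall k, in_circ (coef k)) /\
      frac_eq q (foldr frac_add frac_zero
                   [seq frac_mul (coef k) (gens k) | k <- enum 'I_n]).

Definition circ_noetherian : Prop :=
  forall I, is_ideal I -> finitely_generated I.

End Frac.

(* Main.v *)
Require Import Defs.
From Stdlib Require Import Classical FunctionalExtensionality ClassicalEpsilon.
From HB Require Import structures.
From mathcomp Require Import all_boot all_order all_algebra.
From mathcomp Require Import Rstruct lra zify.

Set Implicit Arguments.
Unset Strict Implicit.
Unset Printing Implicit Defensive.

Import Order.TTheory GRing.Theory Num.Theory.
Local Open Scope ring_scope.
Local Notation R := Rdefinitions.R.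

Lemma nat_min (P : nat -> Prop) : (exists n, P n) -> exists n, P n /\ forall k, P k -> (n <= k)%N.
Proof.
move=> [n Pn]; apply: NNPP => Hno.
suff: forall n k, (k <= n)%N -> ~ P k by move/(_ n n (leqnn n)).
elim=> [|n0 IH] k kn Pk; apply: Hno; exists k; split=> // k' Pk'; rewrite leqNgt; apply/negP=> lt.
  by move: (leq_trans lt kn).
by apply: (IH k') => //; rewrite -ltnS; apply: leq_trans lt kn.
Qed.

Section Lex.
Variable m : nat.
Definition vec := 'I_m -> R.
Definition lexlt (x y : vec) := exists i : 'I_m,
  (forall j : 'I_m, (j < i)%N -> x j = y j) /\ x i < y i.
Definition lexle (x y : vec) := x = y \/ lexlt x y.
Definition vadd (x y : vec) : vec := fun i => x i + y i.
Definition vscale (a : R) (x : vec) : vec := fun i => a * x i.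

Lemma lexlt_trans x y z : lexlt x y -> lexlt y z -> lexlt x z.
Proof.
move=> [i [Hi Hxy]] [j [Hj Hyz]].
case: (ltngtP i j) => [ij|ji|/val_inj ij].
- exists i; split; last by rewrite -(Hj i ij).
  by move=> k ki; rewrite Hi // Hj //; apply: ltn_trans ki ij.
- exists j; split; last by rewrite (Hi j ji).
  by move=> k kj; rewrite Hi ?Hj //; apply: ltn_trans kj ji.
- subst j; exists i; split; last exact: lt_trans Hxy Hyz.
  by move=> k ki; rewrite Hi ?Hj.
Qed.

Lemma lexlt_irr x : ~ lexlt x x.
Proof. by move=> [i [_ H]]; rewrite ltxx in H. Qed.

Lemma lexle_refl x : lexle x x. Proof. by left. Qed.

Lemma lexle_trans x y z : lexle x y -> lexle y z -> lexle x z.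
Proof.
case=> [->//|H1]; case=> [<-|H2]; right=> //; exact: lexlt_trans H1 H2.
Qed.

Lemma lexle_lt_trans x y z : lexle x y -> lexlt y z -> lexlt x z.
Proof. case=> [->//|H1] H2; exact: lexlt_trans H1 H2. Qed.

Lemma lexlt_le_trans x y z : lexlt x y -> lexle y z -> lexlt x z.
Proof. move=> H1; case=> [<-//|H2]; exact: lexlt_trans H1 H2. Qed.

Lemma vaddC x y : vadd x y = vadd y x.
Proof. by apply: functional_extensionality => i; rewrite /vadd addrC. Qed.

Lemma lexlt_add x y u v : lexlt x y -> lexle u v -> lexlt (vadd x u) (vadd y v).
Proof.
move=> [i [Hi Hxy]]; case=> [<-|[j [Hj Huv]]].
  by exists i; split; [move=> k ki; rewrite /vadd Hi|rewrite /vadd ltrD2r].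
case: (ltngtP i j) => [ij|ji|/val_inj ij].
- exists i; split; last by rewrite /vadd (Hj i ij) ltrD2r.
  by move=> k ki; rewrite /vadd Hi // Hj //; apply: ltn_trans ki ij.
- exists j; split; last by rewrite /vadd (Hi j ji) ltrD2l.
  by move=> k kj; rewrite /vadd Hi ?Hj //; apply: ltn_trans kj ji.
- subst j; exists i; split; last exact: ltrD.
  by move=> k ki; rewrite /vadd Hi ?Hj.
Qed.

Lemma lexle_add x y u v : lexle x y -> lexle u v -> lexle (vadd x u) (vadd y v).
Proof.
case=> [<-|H1] H2; last by right; apply: lexlt_add.
case: H2 => [<-|H2]; first by left.
by right; rewrite vaddC [vadd x v]vaddC; apply: lexlt_add => //; left.
Qed.

Lemma lexle_lt_add x y u v : lexle x y -> lexlt u v -> lexlt (vadd x u) (vadd y v).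
Proof. by move=> H1 H2; rewrite vaddC [vadd y v]vaddC; apply: lexlt_add. Qed.

Lemma lexle_scale a x y : 0 <= a -> lexle x y -> lexle (vscale a x) (vscale a y).
Proof.
rewrite le_eqVlt => /orP[/eqP<-|a0].
  by left; apply: functional_extensionality => i; rewrite /vscale !mul0r.
case=> [->|[i [Hi Hxy]]]; first by left.
by right; exists i; split; [move=> k ki; rewrite /vscale Hi|rewrite /vscale ltr_pM2l].
Qed.

Lemma le_lexle x y : (forall i, x i <= y i) -> lexle x y.
Proof.
move=> Hle; case: (classic (x = y)) => [->|ne]; [by left|right].
have ex : exists k, [exists i : 'I_m, (nat_of_ord i == k) && (x i != y i)].
  apply: NNPP => Hn; apply: ne; apply: functional_extensionality => i.
  case: (eqVneq (x i) (y i)) => // H; exfalso; apply: Hn; exists (nat_of_ord i).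
  by apply/existsP; exists i; rewrite eqxx H.
case: (ex_minnP ex) => k /existsP [i /andP [/eqP ik nxy]] kmin.
exists i; split; last by rewrite lt_neqAle nxy Hle.
move=> j ji; case: (eqVneq (x j) (y j)) => // H.
have : (k <= j)%N by apply: kmin; apply/existsP; exists j; rewrite eqxx H.
by rewrite -ik leqNgt ji.
Qed.

Lemma lexle_first (i0 : 'I_m) x y : nat_of_ord i0 = 0%N -> lexle x y -> x i0 <= y i0.
Proof.
move=> i00; case=> [->//|[i [Hi Hxy]]].
case: (eqVneq i i0) => [<-|ne]; first exact: ltW.
by rewrite Hi // i00 lt0n; apply: contra ne => /eqP i0'; apply/eqP/val_inj; rewrite /= i0' i00.
Qed.

Lemma emb_inj (a b : mon m) : (forall i, emb a i = emb b i) -> a = b.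
Proof. by move=> H; apply/ffunP => i; have := H i; rewrite /emb => /eqP; rewrite eqr_nat => /eqP. Qed.

Lemma lexmin_ex (S : mon m -> Prop) s : S s ->
  exists c, S c /\ forall c', S c' -> lexle (emb c) (emb c').
Proof.
move=> Ss.
have H : forall k, (k <= m)%N -> exists c, S c /\ forall c', S c' ->
   (forall j : 'I_m, (j < k)%N -> c' j = c j) \/
   exists i : 'I_m, [/\ (i < k)%N, (forall j : 'I_m, (j < i)%N -> c' j = c j) & (c i < c' i)%N].
  elim=> [_|k IH Hk]; first by exists s; split=> // c' _; left=> j; rewrite ltn0.
  have [c [Sc Hc]] := IH (ltnW Hk).
  pose ik := Ordinal Hk.
  pose T := fun c' => S c' /\ forall j : 'I_m, (j < k)%N -> c' j = c j.
  have Tc : T c by split.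
  have [n [[c2 [Tc2 c2n]] nmin]] := nat_min (ex_intro (fun n => exists c', T c' /\ c' ik = n) (c ik) (ex_intro _ c (conj Tc erefl))).
  exists c2; split; first by case: Tc2.
  move=> c' Sc'; case: (Hc c' Sc') => [agree | [i [ik' Hi ci]]].
  - have Tc' : T c' by split.
    have := nmin (c' ik) (ex_intro _ c' (conj Tc' erefl)); rewrite -c2n => le.
    case: (ltngtP (c2 ik) (c' ik)) => [lt|gt|eq].
    + right; exists ik; split=> //.
      by move=> j jk; rewrite agree // (proj2 Tc2 j jk).
    + by move: le; rewrite leqNgt gt.
    + left=> j; rewrite ltnS leq_eqVlt => /orP[/eqP jk|jk].
        by have -> : j = ik by apply: val_inj.
      by rewrite agree // (proj2 Tc2 j jk).
  - right; exists i; split.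
    + by apply: ltn_trans ik' _.
    + by move=> j ji; rewrite Hi // (proj2 Tc2 j (ltn_trans ji ik')).
    + by rewrite (proj2 Tc2 i ik').
have [c [Sc Hc]] := H m (leqnn m).
exists c; split=> // c' Sc'; case: (Hc c' Sc') => [agree|[i [_ Hi ci]]].
  by left; apply: functional_extensionality => j; rewrite /emb agree.
by right; exists i; split; [move=> j ji; rewrite /emb Hi|rewrite /emb ltr_nat].
Qed.

End Lex.

Lemma mem_mon_divs m (c a : mon m) : (a \in mon_divs c) = [forall i, a i <= c i]%N.
Proof.
rewrite mem_filter; apply/andP/idP => [[]//|H]; split=> //.
have lt i : (a i < mon_bnd c)%N.
  rewrite ltnS; apply: leq_trans (forallP H i) _; exact: leq_bigmax.
apply/mapP; exists [ffun i => Ordinal (lt i)]; first by rewrite mem_enum.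
by apply/ffunP => i; rewrite !ffunE.
Qed.
Lemma uniq_mon_divs m (c : mon m) : uniq (mon_divs c).
Proof.
apply: filter_uniq; rewrite map_inj_uniq ?enum_uniq // => b1 b2 /ffunP H.
by apply/ffunP => i; apply: val_inj; have := H i; rewrite !ffunE.
Qed.

Section Ser.
Variables (K : fieldType) (m : nat).
Implicit Types f g : series K m.

Definition madd (a b : mon m) : mon m := [ffun i => (a i + b i)%N].
Definition Aplus (A B : mon m -> Prop) : mon m -> Prop :=
  fun v => exists a b, A a /\ B b /\ v = madd a b.

Lemma emb_madd a b : emb (madd a b) = vadd (emb a) (emb b).
Proof. by apply: functional_extensionality => i; rewrite /emb /vadd ffunE natrD. Qed.

Lemma madd_sub (a c : mon m) : a \in mon_divs c -> madd a (mon_sub c a) = c.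
Proof.
rewrite mem_mon_divs => /forallP H; apply/ffunP => i.
by rewrite !ffunE subnKC.
Qed.

Lemma supp_mul f g c : supp (ser_mul f g) c -> Aplus (supp f) (supp g) c.
Proof.
rewrite /supp /ser_mul => H.
have [a [ain Ha]] : exists a, a \in mon_divs c /\ f a * g (mon_sub c a) != 0.
  apply: NNPP => Hn; move/eqP: H; apply; apply: big1_seq => a /andP[_ ain].
  case: (eqVneq (f a * g (mon_sub c a)) 0) => // ne; exfalso; apply: Hn; by exists a.
move: Ha; rewrite mulf_eq0 negb_or => /andP[fa ga].
by exists a, (mon_sub c a); split=> //; split=> //; rewrite madd_sub.
Qed.

Lemma mul_at f g a b :
  (forall a' b', f a' != 0 -> g b' != 0 -> madd a' b' = madd a b -> a' = a) ->
  ser_mul f g (madd a b) = f a * g b.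
Proof.
move=> Huniq; rewrite /ser_mul (bigD1_seq a) ?uniq_mon_divs //; last first.
  by rewrite mem_mon_divs; apply/forallP => i; rewrite ffunE leq_addr.
have -> : mon_sub (madd a b) a = b by apply/ffunP => i; rewrite !ffunE addKn.
rewrite big1_seq ?Monoid.mulm1 // => a' /andP[ne ain].
case: (eqVneq (f a' * g (mon_sub (madd a b) a')) 0) => // H; exfalso.
move: H; rewrite mulf_eq0 negb_or => /andP[fa ga].
by move/eqP: ne; apply; apply: Huniq fa ga _; rewrite madd_sub.
Qed.

Definition lm f : mon m := epsilon (inhabits [ffun=> 0%N])
  (fun c => supp f c /\ forall c', supp f c' -> lexle (emb c) (emb c')).

Lemma lm_spec f : ser_nonzero f ->
  supp f (lm f) /\ forall c', supp f c' -> lexle (emb (lm f)) (emb c').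
Proof.
move=> [c fc]; rewrite /lm.
exact: (epsilon_spec _ _ (@lexmin_ex m (supp f) c fc)).
Qed.

Lemma lm_mul f g : ser_nonzero f -> ser_nonzero g ->
  ser_mul f g (madd (lm f) (lm g)) = f (lm f) * g (lm g).
Proof.
move=> nf ng; have [sf lf] := lm_spec nf; have [sg lg] := lm_spec ng.
apply: mul_at => a' b' fa gb E.
case: (lf a' fa) => [/esym H|lt]; first by apply: emb_inj => i; rewrite H.
exfalso; apply: (@lexlt_irr m (emb (madd (lm f) (lm g)))).
rewrite -{2}E !emb_madd; apply: lexlt_add => //; exact: lg.
Qed.

Lemma mul_nonzero f g : ser_nonzero f -> ser_nonzero g -> ser_nonzero (ser_mul f g).
Proof.
move=> nf ng; exists (madd (lm f) (lm g)); rewrite lm_mul // mulf_neq0 //.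
  exact: (proj1 (lm_spec nf)).
exact: (proj1 (lm_spec ng)).
Qed.

Lemma lm_mul_le f g : ser_nonzero f -> ser_nonzero g ->
  lexle (emb (lm (ser_mul f g))) (vadd (emb (lm f)) (emb (lm g))).
Proof.
move=> nf ng; rewrite -emb_madd; apply: (proj2 (lm_spec (mul_nonzero nf ng))).
rewrite /supp lm_mul // mulf_neq0 //.
  exact: (proj1 (lm_spec nf)).
exact: (proj1 (lm_spec ng)).
Qed.

Definition vge f (x : vec m) := forall c, supp f c -> lexle x (emb c).

Lemma vge_mul f g x y : vge f x -> vge g y -> vge (ser_mul f g) (vadd x y).
Proof.
move=> hf hg c /supp_mul [a [b [fa [gb ->]]]]; rewrite emb_madd.
by apply: lexle_add; [apply: hf|apply: hg].
Qed.

Lemma vge_add f g x : vge f x -> vge g x -> vge (ser_add f g) x.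
Proof.
move=> hf hg c; rewrite /supp /ser_add => H.
case: (eqVneq (f c) 0) => [f0|fc]; last exact: hf.
by apply: hg; rewrite /supp; move: H; rewrite f0 add0r.
Qed.

Lemma vge_lm f : ser_nonzero f -> vge f (emb (lm f)).
Proof. by move=> nf c; apply: (proj2 (lm_spec nf)). Qed.

Lemma vge_le f x y : lexle x y -> vge f y -> vge f x.
Proof. by move=> le h c fc; apply: lexle_trans le (h c fc). Qed.

End Ser.

Section NP.
Variable m : nat.
Implicit Types (S A B : mon m -> Prop) (x y z : vec m).

Definition nwg S (s : R) x := exists l : seq (R * mon m),
  (forall q, q \in l -> S q.2 /\ 0 <= q.1) /\ \sum_(q <- l) q.1 = s /\
  forall i, \sum_(q <- l) q.1 * (q.2 i)%:R <= x i.

Lemma nwg_in_newton S x : in_newton S x <-> nwg S 1 x.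
Proof.
split.
  move=> [n [lam [pts [Hs [Hl [H1 H2]]]]]].
  exists [seq (lam k, pts k) | k <- enum 'I_n]; split; last split.
  - by move=> q /mapP [k _ ->]; split; [apply: Hs|apply: Hl].
  - by rewrite big_map big_enum.
  - by move=> i; rewrite big_map big_enum.
move=> [l [Hl [H1 H2]]]; pose d := (0 : R, [ffun=> 0%N] : mon m).
exists (size l), (fun k : 'I_(size l) => (nth d l k).1), (fun k : 'I_(size l) => (nth d l k).2).
split; last split; last split.
- by move=> k; apply: (proj1 (Hl _ (mem_nth d (ltn_ord k)))).
- by move=> k; apply: (proj2 (Hl _ (mem_nth d (ltn_ord k)))).
- by move: H1; rewrite (big_nth d) big_mkord.
- by move=> i; move: (H2 i); rewrite (big_nth d) big_mkord.
Qed.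


Lemma nwg_single S p : S p -> nwg S 1 (emb p).
Proof.
move=> Sp; exists [:: (1, p)]; split; last split.
- by move=> q; rewrite inE => /eqP ->.
- by rewrite big_seq1.
- by move=> i; rewrite big_seq1 mul1r.
Qed.

Lemma nwg_zero S : nwg S 0 (fun _ => 0).
Proof. by exists [::]; split; last split; [|rewrite big_nil|move=> i; rewrite big_nil]. Qed.

Lemma nwg_mono S s x y : nwg S s x -> (forall i, x i <= y i) -> nwg S s y.
Proof.
move=> [l [Hl [H1 H2]]] le; exists l; split=> //; split=> // i.
exact: le_trans (H2 i) (le i).
Qed.

Lemma nwg_sub S A s x : (forall p, S p -> A p) -> nwg S s x -> nwg A s x.
Proof.
move=> SA [l [Hl [H1 H2]]]; exists l; split=> //.
by move=> q ql; have [Sq q0] := Hl q ql; split=> //; apply: SA.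
Qed.

Lemma nwg_add S s1 s2 x1 x2 : nwg S s1 x1 -> nwg S s2 x2 -> nwg S (s1 + s2) (vadd x1 x2).
Proof.
move=> [l1 [Hl1 [H11 H21]]] [l2 [Hl2 [H12 H22]]]; exists (l1 ++ l2); split; last split.
- by move=> q; rewrite mem_cat => /orP[]; [apply: Hl1|apply: Hl2].
- by rewrite big_cat H11 H12.
- by move=> i; rewrite big_cat /vadd; apply: lerD.
Qed.

Lemma nwg_scale S a s x : 0 <= a -> nwg S s x -> nwg S (a * s) (vscale a x).
Proof.
move=> a0 [l [Hl [H1 H2]]]; exists [seq (a * q.1, q.2) | q <- l]; split; last split.
- move=> q /mapP [q' q'l ->] /=; have [Sq q0] := Hl q' q'l; split=> //.
  exact: mulr_ge0.
- by rewrite big_map -H1 mulr_sumr.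
- move=> i; rewrite big_map /vscale.
  under eq_bigr => q _ do rewrite -mulrA.
  by rewrite -mulr_sumr ler_wpM2l.
Qed.

Lemma nwg_list A B (l : seq (R * mon m)) :
  (forall q, q \in l -> A q.2 /\ 0 <= q.1) -> (forall p, A p -> nwg B 1 (emb p)) ->
  nwg B (\sum_(q <- l) q.1) (fun i => \sum_(q <- l) q.1 * (q.2 i)%:R).
Proof.
move=> Hl HAB; elim: l Hl => [|q l IH] Hl.
  by rewrite big_nil; apply: nwg_mono (nwg_zero B) _ => i; rewrite big_nil.
have [Aq q0] := Hl q (mem_head _ _).
have IH' : nwg B (\sum_(q <- l) q.1) (fun i => \sum_(q <- l) q.1 * (q.2 i)%:R).
  by apply: IH => q' ql; apply: Hl; rewrite inE ql orbT.
have := nwg_add (nwg_scale q0 (HAB _ Aq)) IH'.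
rewrite mulr1 big_cons => H; apply: nwg_mono H _ => i.
by rewrite /vadd /vscale /emb big_cons.
Qed.

Lemma nwg_comp A B s x : (forall p, A p -> nwg B 1 (emb p)) -> nwg A s x -> nwg B s x.
Proof.
move=> HAB [l [Hl [<- H2]]]; apply: nwg_mono (nwg_list Hl HAB) _; exact: H2.
Qed.

Lemma nwg_fam S (I : Type) (r : seq I) (pi : I -> R) (y : I -> vec m) :
  (forall k, 0 <= pi k) -> (forall k, nwg S 1 (y k)) ->
  nwg S (\sum_(k <- r) pi k) (fun i => \sum_(k <- r) pi k * y k i).
Proof.
move=> p0 Hy; elim: r => [|k r IH].
  by rewrite big_nil; apply: nwg_mono (nwg_zero S) _ => i; rewrite big_nil.
have := nwg_add (nwg_scale (p0 k) (Hy k)) IH; rewrite mulr1 big_cons => H.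
by apply: nwg_mono H _ => i; rewrite /vadd /vscale big_cons.
Qed.

Lemma nwg_ge0 S s x : nwg S s x -> 0 <= s.
Proof. by move=> [l [Hl [<- _]]]; rewrite big_seq; apply: sumr_ge0 => q ql; case: (Hl q ql). Qed.

End NP.

Section Vert.
Variable m : nat.
Implicit Types (S A B : mon m -> Prop) (x y z : vec m).

Lemma is_vertexE S x : is_vertex S x <-> nwg S 1 x /\
  forall y z (t : R), nwg S 1 y -> nwg S 1 z -> 0 < t -> t < 1 ->
    (forall i, x i = t * y i + (1 - t) * z i) -> forall i, y i = z i.
Proof.
rewrite /is_vertex nwg_in_newton; split=> [[H1 H2]|[H1 H2]]; split=> //.
  by move=> y z t ny nz; apply: H2; apply/nwg_in_newton.
by move=> y z t /nwg_in_newton ny /nwg_in_newton nz; apply: H2.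
Qed.

Lemma vert_np A B : (forall x, nwg A 1 x <-> nwg B 1 x) -> forall v, vert A v <-> vert B v.
Proof.
move=> E v; rewrite /vert !is_vertexE; split=> [[H1 H2]|[H1 H2]]; split.
- by apply/E.
- by move=> y z t /E ny /E nz; apply: H2.
- by apply/E.
- by move=> y z t /E ny /E nz; apply: H2.
Qed.

Lemma vert_sub S v : vert S v -> S v.
Proof.
move=> /is_vertexE [[l [Hl [H1 H2]]] Hext].
pose sig i := \sum_(q <- l) q.1 * (q.2 i)%:R.
have Heq : forall i, sig i = emb v i.
  move=> i; apply/eqP; rewrite eq_le H2 /=; apply/negP => /negP; rewrite -ltNge => lt.
  pose d := emb v i - sig i.
  pose y := fun j => emb v j - (if j == i then d else 0).
  pose z := fun j => emb v j + (if j == i then d else 0).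
  have ny : nwg S 1 y.
    exists l; split=> //; split=> // j; rewrite /y; case: eqP => [->|_].
      by rewrite /d -/(sig i); lra.
    by rewrite subr0; apply: H2.
  have nz : nwg S 1 z.
    exists l; split=> //; split=> // j; rewrite /z; case: eqP => [->|_].
      by rewrite /d -/(sig i); lra.
    by rewrite addr0; apply: H2.
  have H : y i = z i.
    apply: (Hext y z (1/2)) => //; [lra|lra|by move=> j; rewrite /y /z; case: (j == i); lra].
  move: H; rewrite /y /z eqxx /d -/(sig i) => H.
  have E : sig i = emb v i by lra.
  by rewrite E ltxx in lt.
have [q [ql qpos]] : exists q, q \in l /\ 0 < q.1.
  apply: NNPP => Hn.
  have : \sum_(q <- l) q.1 <= 0.
    rewrite big_seq; apply: sumr_le0 => q ql; rewrite leNgt; apply/negP => lt.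
    by apply: Hn; exists q.
  by rewrite H1; lra.
set w := q.1 in qpos; set p := q.2.
have Sp : S p by case: (Hl q ql).
have Hr : forall q', q' \in rem q l -> S q'.2 /\ 0 <= q'.1.
  by move=> q' /mem_rem; apply: Hl.
have W : \sum_(q' <- rem q l) q'.1 = 1 - w.
  by move: H1; rewrite (perm_big _ (perm_to_rem ql)) big_cons /= -/w; lra.
have Sg : forall j, sig j = w * (p j)%:R + \sum_(q' <- rem q l) q'.1 * (q'.2 j)%:R.
  by move=> j; rewrite /sig (perm_big _ (perm_to_rem ql)) big_cons.
have W0 : 0 <= \sum_(q' <- rem q l) q'.1.
  by rewrite big_seq; apply: sumr_ge0 => q' /Hr [].
suff : forall j, emb v j = emb p j by move/emb_inj ->.
have [w1|wlt] : w = 1 \/ w < 1 by rewrite W in W0; move: W0; rewrite le_eqVlt => /orP[/eqP|]; [left; lra|right; lra].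
  have Z : forall q', q' \in rem q l -> q'.1 = 0.
    move=> q' q'r; apply/eqP.
    have H0 : \sum_(q' <- rem q l | q' \in rem q l) q'.1 == 0 by rewrite -big_seq W w1 subrr.
    rewrite psumr_eq0 in H0; last by move=> i /Hr[].
    by move/allP: H0 => /(_ q' q'r); rewrite q'r.
  move=> j; rewrite -Heq Sg big1_seq; first by rewrite addr0 w1 mul1r.
  by move=> q' /andP[_ q'r]; rewrite Z // mul0r.
have nz : 1 - w != 0 by rewrite lt0r_neq0 // subr_gt0.
pose zr := vscale (1/(1-w)) (fun j => \sum_(q' <- rem q l) q'.1 * (q'.2 j)%:R).
have nr : nwg S (1 - w) (fun j => \sum_(q' <- rem q l) q'.1 * (q'.2 j)%:R).
  by exists (rem q l); split=> //; split.
have nzr : nwg S 1 zr.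
  have h0 : 0 <= 1 / (1 - w) by rewrite mul1r invr_ge0 subr_ge0 ltW.
  have e : 1 / (1 - w) * (1 - w) = 1 by rewrite mul1r mulVf.
  by have := nwg_scale h0 nr; rewrite e; apply.
have E2 : forall j, emb v j = w * emb p j + (1 - w) * zr j.
  by move=> j; rewrite -Heq Sg /zr /vscale /emb mulrA mul1r mulfV // mul1r.
have E := Hext (emb p) zr w (nwg_single Sp) nzr qpos wlt E2.
by move=> j; rewrite E2 -(E j); lra.
Qed.

End Vert.

Section Dickson.
Variable m : nat.

Definition covers (S : mon m -> Prop) (P : seq (mon m)) :=
  (forall p, p \in P -> S p) /\
  forall s, S s -> exists2 p, p \in P & forall i, (p i <= s i)%N.

Lemma basis_ex (S : mon m -> Prop) : exists P, covers S P.
Proof.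
have H : forall k (A : {set 'I_m}) (S : mon m -> Prop), (#|A| <= k)%N ->
    (forall s s', S s -> S s' -> forall i, i \notin A -> s i = s' i) ->
    exists P, covers S P.
  elim=> [|k IH] A S' cA HS.
    case: (classic (exists s, S' s)) => [[s0 Ss0]|nS]; last first.
      by exists [::]; split=> // s Ss; exfalso; apply: nS; exists s.
    exists [:: s0]; split; first by move=> p; rewrite inE => /eqP ->.
    move=> s Ss; exists s0; first by rewrite inE.
    move=> i; rewrite (HS s0 s) //.
    by move: cA; rewrite leqn0 cards_eq0 => /eqP ->; rewrite inE.
  case: (classic (exists s, S' s)) => [[s0 Ss0]|nS]; last first.
    by exists [::]; split=> // s Ss; exfalso; apply: nS; exists s.
  have HL : forall L : seq ('I_m * nat)%type, (forall ij, ij \in L -> ij.1 \in A) ->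
      exists P : seq (mon m), (forall p, p \in P -> S' p) /\
        forall s, S' s -> (exists2 ij, ij \in L & s ij.1 = ij.2) ->
          exists2 p, p \in P & forall i, (p i <= s i)%N.
    move=> L; elim: L => [|ij L IHL] HA.
      by exists [::]; split=> // s _ [ij].
    have [P1 [HP1 CP1]] : exists P1 : seq (mon m), (forall p, p \in P1 -> S' p) /\
        forall s, S' s -> s ij.1 = ij.2 -> exists2 p, p \in P1 & forall i, (p i <= s i)%N.
      have iA : ij.1 \in A by apply: HA; rewrite inE eqxx.
      have c1 : (#|A :\ ij.1| <= k)%N by move: cA; rewrite (cardsD1 ij.1) iA.
      have c2 : forall s s', (fun s => S' s /\ s ij.1 = ij.2) s -> (fun s => S' s /\ s ij.1 = ij.2) s' ->
          forall i, i \notin A :\ ij.1 -> s i = s' i.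
        move=> s s' [Ss e] [Ss' e'] i; rewrite !inE negb_and negbK.
        case: (eqVneq i ij.1) => [->|ne] /= Hi; first by rewrite e e'.
        exact: HS.
      have [P [HP CP]] := IH (A :\ ij.1) (fun s => S' s /\ s ij.1 = ij.2) c1 c2.
      exists P; split; first by move=> p /HP [].
      by move=> s Ss sij; apply: CP.
    have HA' : forall ij', ij' \in L -> ij'.1 \in A by move=> ij' h; apply: HA; rewrite inE h orbT.
    have [P2 [HP2 CP2]] := IHL HA'.
    exists (P1 ++ P2); split.
      by move=> p; rewrite mem_cat => /orP[]; [apply: HP1|apply: HP2].
    move=> s Ss [ij' ]; rewrite inE => /orP[/eqP ->|ijL] sij.
      by have [p pP le] := CP1 s Ss sij; exists p => //; rewrite mem_cat pP.
    have [p pP le] := CP2 s Ss (ex_intro2 _ _ ij' ijL sij).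
    by exists p => //; rewrite mem_cat pP orbT.
  have HAp : forall ij, ij \in [seq (i, j) | i <- enum A, j <- iota 0 (s0 i)] -> ij.1 \in A.
    by move=> ij /allpairsPdep [i [j [iA _ ->]]]; rewrite mem_enum in iA.
  have [P [HP CP]] := HL _ HAp.
  exists (s0 :: P); split.
    by move=> p; rewrite inE => /orP[/eqP ->//|]; apply: HP.
  move=> s Ss; case: (boolP [forall i, s0 i <= s i]%N) => [/forallP le|].
    by exists s0; rewrite ?inE ?eqxx.
  rewrite negb_forall => /existsP [i]; rewrite -ltnNge => lt.
  have iA : i \in A.
    apply: contraTT lt => niA; by rewrite (HS s0 s) // ltnn.
  have ex : exists2 ij, ij \in [seq (i, j) | i <- enum A, j <- iota 0 (s0 i)] & s ij.1 = ij.2.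
    exists (i, s i) => //; apply/allpairsPdep; exists i, (s i); split=> //.
      by rewrite mem_enum.
    by rewrite mem_iota add0n.
  have [p pP le] := CP s Ss ex.
  by exists p => //; rewrite inE pP orbT.
apply: (H m [set: 'I_m]); first by rewrite cardsT card_ord.
by move=> s s' _ _ i; rewrite inE.
Qed.

End Dickson.

Section Mink.
Variable m : nat.
Implicit Types (S A B : mon m -> Prop) (x y z : vec m).

Lemma emb_le (a b : mon m) : (forall i, (a i <= b i)%N) -> forall i, emb a i <= emb b i.
Proof. by move=> H i; rewrite /emb ler_nat. Qed.

Lemma nwg_basis S P s x : covers S P -> nwg S s x -> nwg (fun p => p \in P) s x.
Proof.
move=> [_ CP]; apply: nwg_comp => a Sa; have [p pP le] := CP a Sa.
by apply: nwg_mono (nwg_single (S := fun p => p \in P) pP) _; apply: emb_le.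
Qed.

Lemma split_list (A : mon m -> Prop) (l : seq (R * mon m)) p :
  (forall q, q \in l -> A q.2 /\ 0 <= q.1) ->
  [/\ \sum_(q <- l) q.1 = \sum_(q <- l | q.2 == p) q.1 + \sum_(q <- l | q.2 != p) q.1,
      forall j, \sum_(q <- l) q.1 * (q.2 j)%:R =
         (\sum_(q <- l | q.2 == p) q.1) * (p j)%:R + \sum_(q <- l | q.2 != p) q.1 * (q.2 j)%:R,
      0 <= \sum_(q <- l | q.2 != p) q.1,
      forall j, 0 <= \sum_(q <- l | q.2 != p) q.1 * (q.2 j)%:R &
      nwg (fun a => A a /\ a != p) (\sum_(q <- l | q.2 != p) q.1)
          (fun j => \sum_(q <- l | q.2 != p) q.1 * (q.2 j)%:R)].
Proof.
move=> Hl; split.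
- by rewrite (bigID (fun q => q.2 == p)).
- move=> j; rewrite (bigID (fun q => q.2 == p)) /= mulr_suml; congr (_ + _).
  by apply: eq_bigr => q /eqP ->.
- by rewrite big_seq_cond; apply: sumr_ge0 => q /andP[/Hl[] _ ->].
- move=> j; rewrite big_seq_cond; apply: sumr_ge0 => q /andP[/Hl[] _ q0 _].
  by apply: mulr_ge0.
- exists [seq q <- l | q.2 != p]; split; last split.
  + move=> q; rewrite mem_filter => /andP[nq ql]; have [Aq q0] := Hl q ql.
    by split.
  + by rewrite big_filter.
  + by move=> j; rewrite big_filter.
Qed.


Lemma remove_nonvertex S (P : seq (mon m)) p :
  (forall a, a \in P -> S a) -> (forall y, nwg S 1 y -> nwg (fun a => a \in P) 1 y) ->
  p \in P -> ~ vert S p -> nwg (fun a => a \in P /\ a != p) 1 (emb p).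
Proof.
move=> PS SP pP npv; apply: NNPP => Hn; apply: npv; apply/is_vertexE; split.
  by apply: nwg_single; apply: PS.
move=> y z t ny nz t0 t1 E i; apply: NNPP => neq; apply: Hn.
have [ly [Hly [H1y H2y]]] := SP _ ny.
have [lz [Hlz [H1z H2z]]] := SP _ nz.
have [Wy Sy Wny Nny NWy] := split_list (A := fun a => a \in P) p Hly.
have [Wz Sz Wnz Nnz NWz] := split_list (A := fun a => a \in P) p Hlz.
set ey := \sum_(q <- ly | q.2 == p) q.1 in Wy Sy.
set ny' := \sum_(q <- ly | q.2 != p) q.1 in Wy Wny NWy.
set ez := \sum_(q <- lz | q.2 == p) q.1 in Wz Sz.
set nz' := \sum_(q <- lz | q.2 != p) q.1 in Wz Wnz NWz.
pose Ny j := \sum_(q <- ly | q.2 != p) q.1 * (q.2 j)%:R.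
pose Nz j := \sum_(q <- lz | q.2 != p) q.1 * (q.2 j)%:R.
have Ey : forall j, ey * emb p j + Ny j <= y j by move=> j; rewrite -Sy; apply: H2y.
have Ez : forall j, ez * emb p j + Nz j <= z j by move=> j; rewrite -Sz; apply: H2z.
have t1' : 0 < 1 - t by rewrite subr_gt0.
pose W := t * ny' + (1 - t) * nz'.
have W0 : 0 <= W by rewrite /W addr_ge0 // mulr_ge0 // ltW.
move: W0; rewrite le_eqVlt => /orP[/eqP W0|Wpos].
  exfalso; apply: neq.
  have ny0 : ny' = 0 by move: W0; rewrite /W; nra.
  have nz0 : nz' = 0 by move: W0; rewrite /W; nra.
  have py : emb p i <= y i by have := Ey i; have := Nny i; rewrite /Ny; nra.
  have pz : emb p i <= z i by have := Ez i; have := Nnz i; rewrite /Nz; nra.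
  have := E i; nra.
have N1 := nwg_add (nwg_scale (ltW t0) NWy) (nwg_scale (ltW t1') NWz).
have Wi : 0 <= W^-1 by rewrite invr_ge0 ltW.
have N2 := nwg_scale Wi N1.
rewrite -/W mulVf ?gt_eqF // in N2.
apply: nwg_mono (nwg_sub _ N2) _ => [a [[aP anp]]|j].
  by [].
rewrite /vscale /vadd ler_pdivrMl //.
have := Ey j; have := Ez j; have := E j; have := Nny j; have := Nnz j.
rewrite /Ny /Nz /W => h1 h2 h3 h4 h5.
have ey1 : ey = 1 - ny' by rewrite -H1y Wy; lra.
have ez1 : ez = 1 - nz' by rewrite -H1z Wz; lra.
have k1 := ler_wpM2l (ltW t0) h5.
have k2 := ler_wpM2l (ltW t1') h4.
rewrite ey1 in k1; rewrite ez1 in k2.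
nra.
Qed.


Lemma mink S x : nwg S 1 x -> nwg (vert S) 1 x.
Proof.
have [P [PS CP]] := basis_ex S.
suff H : forall n (P : seq (mon m)), (size P <= n)%N -> (forall a, a \in P -> S a) ->
    (forall y, nwg S 1 y -> nwg (fun a => a \in P) 1 y) ->
    forall x, nwg S 1 x -> nwg (vert S) 1 x.
  by apply: (H _ P (leqnn _) PS) => y; apply: nwg_basis.
elim=> [|n IH] P' sP PS' SP' x0 nx.
  apply: nwg_sub (SP' _ nx) => a; move: sP; rewrite leqn0 => /nilP ->.
  by rewrite in_nil.
case: (classic (forall a, a \in P' -> vert S a)) => [allv|nall].
  by apply: nwg_sub (SP' _ nx) => a; apply: allv.
have [p pP npv] : exists2 p, p \in P' & ~ vert S p.
  apply: NNPP => Hn; apply: nall => a aP; apply: NNPP => na; apply: Hn; by exists a.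
have Hp := remove_nonvertex PS' SP' pP npv.
apply: (IH [seq a <- P' | a != p]) => //.
- rewrite size_filter; have := count_predC (pred1 p) P'.
  have : (0 < count (pred1 p) P')%N by rewrite -has_count has_pred1.
  move: sP; rewrite /predC /=.
  have -> : count (fun a => a != p) P' = count [pred x | x != p] P' by [].
  move=> h1 h2 h3; rewrite -ltnS; apply: leq_trans h1.
  by rewrite -h3 -[X in (X < _)%N]add0n ltn_add2r.
- by move=> a; rewrite mem_filter => /andP[_]; apply: PS'.
- move=> y ny; apply: nwg_comp (SP' y ny) => a aP.
  case: (eqVneq a p) => [->|ne].
    by apply: nwg_sub Hp => b [bP bp]; rewrite mem_filter bp.
  by apply: nwg_single; rewrite mem_filter ne.
Qed.

Lemma np_vert S x : nwg (vert S) 1 x <-> nwg S 1 x.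
Proof. by split; [apply: nwg_sub => v; apply: vert_sub|apply: mink]. Qed.

End Mink.

Section Plus.
Variable m : nat.
Implicit Types (S A B : mon m -> Prop) (x y z : vec m).

Lemma nwg_translate A B a s y : A a -> nwg B s y ->
  nwg (Aplus A B) s (vadd (vscale s (emb a)) y).
Proof.
move=> Aa [l [Hl [H1 H2]]]; exists [seq (q.1, madd a q.2) | q <- l]; split; last split.
- move=> q /mapP [q' q'l ->] /=; have [Bq q0] := Hl q' q'l; split=> //.
  by exists a, q'.2.
- by rewrite big_map.
- move=> i; rewrite big_map /vadd /vscale -H1 mulr_suml /=.
  under eq_bigr => q _ do rewrite ffunE natrD mulrDr.
  by rewrite big_split /= lerD2l.
Qed.


Lemma nwg_plus_gen A B y (l : seq (R * mon m)) : nwg B 1 y ->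
  (forall q, q \in l -> A q.2 /\ 0 <= q.1) ->
  nwg (Aplus A B) (\sum_(q <- l) q.1)
    (fun i => \sum_(q <- l) q.1 * (q.2 i)%:R + (\sum_(q <- l) q.1) * y i).
Proof.
move=> ny; elim: l => [|q l IH] Hl.
  by rewrite big_nil; apply: nwg_mono (nwg_zero _) _ => i; rewrite !big_nil mul0r addr0.
have [Aq q0] := Hl q (mem_head _ _).
have IH' : nwg (Aplus A B) (\sum_(q <- l) q.1)
    (fun i => \sum_(q <- l) q.1 * (q.2 i)%:R + (\sum_(q <- l) q.1) * y i).
  by apply: IH => q' h; apply: Hl; rewrite inE h orbT.
have H := nwg_add (nwg_scale q0 (nwg_translate Aq ny)) IH'.
have e : q.1 * 1 + \sum_(q <- l) q.1 = \sum_(q' <- q :: l) q'.1 by rewrite big_cons mulr1.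
rewrite e in H; apply: nwg_mono H _ => i.
rewrite /vadd /vscale !big_cons mul1r /emb; lra.
Qed.

Lemma nwg_plus A B x y : nwg A 1 x -> nwg B 1 y -> nwg (Aplus A B) 1 (vadd x y).
Proof.
move=> [l [Hl [H1 H2]]] ny; have := nwg_plus_gen ny Hl; rewrite H1 => H.
by apply: nwg_mono H _ => i; rewrite mul1r /vadd lerD2r.
Qed.

Lemma nwg_decomp A B s z : nwg (Aplus A B) s z ->
  exists za zb, [/\ nwg A s za, nwg B s zb & forall i, za i + zb i <= z i].
Proof.
move=> [l [Hl [<- H2]]].
suff [za [zb [na nb E]]] : exists za zb, [/\ nwg A (\sum_(q <- l) q.1) za,
    nwg B (\sum_(q <- l) q.1) zb & forall i, za i + zb i = \sum_(q <- l) q.1 * (q.2 i)%:R].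
  by exists za, zb; split=> // i; rewrite E.
elim: l Hl {H2} => [|q l IH] Hl.
  exists (fun _ => 0), (fun _ => 0); rewrite big_nil; split; try exact: nwg_zero.
  by move=> i; rewrite big_nil addr0.
have [[a [b [Aa [Bb qe]]]] q0] := Hl q (mem_head _ _).
have [za [zb [na nb E]]] : exists za zb, [/\ nwg A (\sum_(q <- l) q.1) za,
    nwg B (\sum_(q <- l) q.1) zb & forall i, za i + zb i = \sum_(q <- l) q.1 * (q.2 i)%:R].
  by apply: IH => q' h; apply: Hl; rewrite inE h orbT.
exists (vadd (vscale q.1 (emb a)) za), (vadd (vscale q.1 (emb b)) zb); rewrite big_cons; split.
- by have := nwg_add (nwg_scale q0 (nwg_single Aa)) na; rewrite mulr1.
- by have := nwg_add (nwg_scale q0 (nwg_single Bb)) nb; rewrite mulr1.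
- move=> i; rewrite big_cons -E qe /vadd /vscale /emb ffunE natrD; lra.
Qed.

Lemma vert_plus_unique A B v a b a' b' : vert (Aplus A B) v ->
  A a -> B b -> A a' -> B b' -> v = madd a b -> v = madd a' b' -> a = a'.
Proof.
move=> /is_vertexE [_ Hext] Aa Bb Aa' Bb' e1 e2.
have H1 : nwg (Aplus A B) 1 (emb (madd a b')) by apply: nwg_single; exists a, b'.
have H2 : nwg (Aplus A B) 1 (emb (madd a' b)) by apply: nwg_single; exists a', b.
have E : forall i, emb v i = 1/2 * emb (madd a b') i + (1 - 1/2) * emb (madd a' b) i.
  move=> i; have h1 := congr1 (fun f : mon m => f i) e1; have h2 := congr1 (fun f : mon m => f i) e2.
  simpl in h1, h2; rewrite !ffunE in h1 h2.
  have r1 : (v i)%:R = (a i)%:R + (b i)%:R :> R by rewrite h1 natrD.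
  have r2 : (v i)%:R = (a' i)%:R + (b' i)%:R :> R by rewrite h2 natrD.
  rewrite /emb !ffunE !natrD; lra.
have := Hext _ _ (1/2) H1 H2 _ _ E; rewrite -/(1/2) => H.
have H' : forall i, emb (madd a b') i = emb (madd a' b) i by apply: H; lra.
apply/ffunP => i; have := H' i; rewrite /emb !ffunE => /eqP; rewrite eqr_nat => /eqP h.
have := congr1 (fun f : mon m => f i) e1; have := congr1 (fun f : mon m => f i) e2.
rewrite /= !ffunE => h2 h1.
have h3 : (a i + b' i + (a i + b i) = a' i + b i + (a' i + b' i))%N by rewrite h -h1 -h2.
lia.
Qed.

End Plus.

Section SerNP.
Variables (K : fieldType) (m : nat).
Implicit Types (f g : series K m) (S A B : mon m -> Prop).

Lemma vert_plus_supp f g v : vert (Aplus (supp f) (supp g)) v -> supp (ser_mul f g) v.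
Proof.
move=> vv; have [a [b [fa [gb e]]]] := vert_sub vv.
rewrite /supp e mul_at ?mulf_neq0 // => a' b' fa' gb' e'.
by apply/esym; apply: (vert_plus_unique vv fa gb fa' gb' e); rewrite e.
Qed.

Lemma np_mul_hard f g x : nwg (Aplus (supp f) (supp g)) 1 x -> nwg (supp (ser_mul f g)) 1 x.
Proof. by move=> /mink; apply: nwg_sub => v; apply: vert_plus_supp. Qed.

Lemma np_mul_easy f g x : nwg (supp (ser_mul f g)) 1 x -> nwg (Aplus (supp f) (supp g)) 1 x.
Proof. by apply: nwg_sub => v; apply: supp_mul. Qed.

Definition incl_np f g := forall c, supp f c -> nwg (supp g) 1 (emb c).

Lemma circ_mul f1 g1 f2 g2 : incl_np f1 g1 -> incl_np f2 g2 ->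
  incl_np (ser_mul f1 f2) (ser_mul g1 g2).
Proof.
move=> h1 h2 c /supp_mul [a [b [fa [fb ->]]]]; apply: np_mul_hard.
by rewrite emb_madd; apply: nwg_plus; [apply: h1|apply: h2].
Qed.

Lemma incl_refl f : incl_np f f.
Proof. by move=> c fc; apply: nwg_single. Qed.

Lemma incl_mul_comm f g h : incl_np f (ser_mul g h) -> incl_np f (ser_mul h g).
Proof.
move=> H c fc; apply: np_mul_hard; have := np_mul_easy (H c fc).
apply: nwg_sub => v [a [b [ga [hb ->]]]]; exists b, a; split=> //; split=> //.
by apply/ffunP => i; rewrite !ffunE addnC.
Qed.

Lemma circ_add f1 g1 f2 g2 : incl_np f1 g1 -> incl_np f2 g2 ->
  incl_np (ser_add (ser_mul f1 g2) (ser_mul f2 g1)) (ser_mul g1 g2).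
Proof.
move=> h1 h2 c; rewrite /supp /ser_add.
case: (eqVneq (ser_mul f1 g2 c) 0) => [e|ne] H.
  rewrite e add0r in H.
  exact: (incl_mul_comm (circ_mul h2 (@incl_refl g1)) H).
exact: (circ_mul h1 (@incl_refl g2) ne).
Qed.

End SerNP.

Section Char.
Variable m : nat.
Implicit Types (S A B F G : mon m -> Prop).

Lemma vert_seteq A B : (forall v, A v <-> B v) -> forall v, vert A v <-> vert B v.
Proof. by move=> H; apply: vert_np => x; split; apply: nwg_sub => v; apply H. Qed.

Lemma vert_vert A v : vert (vert A) v <-> vert A v.
Proof. by apply: vert_np => x; apply: np_vert. Qed.

Lemma vbmul_one X v : vb_mul X (vb_one m) v <-> vert X v.
Proof.
apply: vert_seteq => w; split.
  move=> [x [y [Xx [y0 e]]]]; have -> : w = x by apply/ffunP => i; rewrite e y0 addn0.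
  done.
move=> Xw; exists w, [ffun=> 0%N]; split=> //; split=> i; rewrite ?ffunE ?addn0 //.
Qed.

Lemma vb_le_char F G : vb_le (vert F) (vert G) (vb_one m) (vb_one m) <->
  forall c, F c -> nwg G 1 (emb c).
Proof.
rewrite /vb_le /seteq /vb_add.
have L : forall v, vert (fun v => vb_mul (vert F) (vb_one m) v \/ vb_mul (vert G) (vb_one m) v) v
    <-> vert (fun v => F v \/ G v) v.
  move=> v; apply: iff_trans (vert_seteq (B := fun v => vert F v \/ vert G v) _ v) _.
    move=> w; rewrite !vbmul_one !vert_vert; done.
  apply: vert_np => x; split.
    by apply: nwg_sub => w [] /vert_sub; [left|right].
  apply: nwg_comp => w [Fw|Gw].
    by apply: nwg_sub (mink (nwg_single Fw)) => u; left.
  by apply: nwg_sub (mink (nwg_single Gw)) => u; right.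
have Rr : forall v, vb_mul (vert G) (vb_one m) v <-> vert G v.
  by move=> v; rewrite vbmul_one vert_vert.
split.
  move=> H c Fc.
  have := mink (nwg_single (S := fun v => F v \/ G v) (or_introl Fc)).
  apply: nwg_sub => v /L /H /Rr; apply: vert_sub.
move=> H v; rewrite L Rr; apply: vert_np => x; split.
  apply: nwg_comp => w [Fw|Gw]; [exact: H|exact: nwg_single].
by apply: nwg_sub => w; right.
Qed.

End Char.

Lemma in_circ_char (K : fieldType) m (q : Defs.frac K m) :
  in_circ q <-> frac_wf q /\ incl_np q.1 q.2.
Proof. by rewrite /in_circ /trop vb_le_char. Qed.

Lemma sum_delta n (k : 'I_n) (F : 'I_n -> R) :
  \sum_(j < n) (if j == k then F j else 0) = F k.
Proof.
by rewrite (bigD1 k) //= eqxx big1 ?addr0 // => j /negbTE ->.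
Qed.

Lemma stationary n (M : 'I_n -> 'I_n -> R) : (0 < n)%N ->
  (forall i j, 0 <= M i j) -> (forall i, \sum_j M i j = 1) ->
  exists pi : 'I_n -> R, [/\ forall i, 0 <= pi i, \sum_i pi i = 1 &
    forall j, \sum_i pi i * M i j = pi j].
Proof.
move=> n0 M0 M1.
pose A : 'M[R]_n := \matrix_(i, j) (M i j - (i == j)%:R).
have dA : \det A == 0.
  rewrite -det_tr; apply/det0P; exists (const_mx 1).
    apply/eqP => /matrixP /(_ 0 (Ordinal n0)); rewrite !mxE => /eqP.
    by rewrite oner_eq0.
  apply/matrixP => i j; rewrite !mxE.
  under eq_bigr => k _ do rewrite !mxE mul1r.
  rewrite sumrB M1.
  have -> : \sum_(k < n) ((j == k)%:R : R) = 1.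
    by rewrite (bigD1 j) //= eqxx big1 ?addr0 // => k; rewrite eq_sym => /negbTE ->.
  by rewrite subrr.
have [u u0 uA] := det0P dA.
have Hu : forall j, \sum_i u 0 i * M i j = u 0 j.
  move=> j; have := congr1 (fun B : 'M_(1, n) => B 0 j) uA; rewrite !mxE /=.
  under eq_bigr => i _ do rewrite !mxE mulrBr.
  rewrite sumrB.
  have -> : \sum_(i < n) u 0 i * (i == j)%:R = u 0 j.
    by rewrite -(sum_delta j (u 0)); apply: eq_bigr => i _; case: (i == j); rewrite ?mulr1 ?mulr0.
  by move/eqP; rewrite subr_eq0 => /eqP.
pose a i := `|u 0 i|.
have a0 : forall i, 0 <= a i by move=> i; apply: normr_ge0.
have ale : forall j, a j <= \sum_i a i * M i j.
  move=> j; rewrite /a -Hu; apply: le_trans (ler_norm_sum _ _ _) _.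
  by apply: ler_sum => i _; rewrite normrM (ger0_norm (M0 i j)).
have Seq : \sum_j \sum_i a i * M i j = \sum_i a i.
  rewrite exchange_big /=; apply: eq_bigr => i _; by rewrite -mulr_sumr M1 mulr1.
have aeq : forall j, \sum_i a i * M i j = a j.
  have : \sum_j (\sum_i a i * M i j - a j) = 0 by rewrite sumrB Seq subrr.
  move/psumr_eq0P => H j; apply/eqP; rewrite -subr_eq0; apply/eqP; apply: H => //.
  by move=> i _; rewrite subr_ge0.
have Spos : 0 < \sum_i a i.
  rewrite lt_neqAle sumr_ge0 // andbT eq_sym; apply/negP => /eqP S0.
  apply/negP: u0; rewrite negbK; apply/eqP/matrixP => i j; rewrite ord1 mxE.
  by apply/eqP; rewrite -normr_eq0; apply/eqP; apply: (psumr_eq0P _ S0).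
exists (fun i => a i / \sum_i a i); split.
- by move=> i; rewrite divr_ge0 // ltW.
- by rewrite -mulr_suml mulfV // gt_eqF.
- move=> j; rewrite -aeq mulr_suml; apply: eq_bigr => i _; rewrite mulrAC.
  done.
Qed.

Section Cancel.
Variable m : nat.

Lemma idx_weights (B : seq (mon m)) (d : mon m) s z : nwg (fun p => p \in B) s z ->
  exists mu : 'I_(size B) -> R, [/\ forall j, 0 <= mu j, \sum_j mu j = s &
    forall c, \sum_j mu j * ((nth d B j) c)%:R <= z c].
Proof.
move=> [l [Hl [<- H2]]].
suff [mu [mu0 mu1 mu2]] : exists mu : 'I_(size B) -> R, [/\ forall j, 0 <= mu j,
    \sum_j mu j = \sum_(q <- l) q.1 &
    forall c, \sum_j mu j * ((nth d B j) c)%:R = \sum_(q <- l) q.1 * (q.2 c)%:R].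
  by exists mu; split=> // c; rewrite mu2.
elim: l Hl {H2} => [|q l IH] Hl.
  exists (fun _ => 0); split=> //; first by rewrite big_nil big1.
  by move=> c; rewrite big_nil big1 // => j _; rewrite mul0r.
have [qB q0] := Hl q (mem_head _ _).
have [mu [mu0 mu1 mu2]] : exists mu : 'I_(size B) -> R, [/\ forall j, 0 <= mu j,
    \sum_j mu j = \sum_(q <- l) q.1 &
    forall c, \sum_j mu j * ((nth d B j) c)%:R = \sum_(q <- l) q.1 * (q.2 c)%:R].
  by apply: IH => q' h; apply: Hl; rewrite inE h orbT.
have kB : (index q.2 B < size B)%N by rewrite index_mem.
pose k := Ordinal kB.
exists (fun j => mu j + (if j == k then q.1 else 0)); split.
- by move=> j; rewrite addr_ge0 //; case: (j == k).
- by rewrite big_split /= sum_delta big_cons mu1 addrC.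
- move=> c; rewrite big_cons -mu2.
  under eq_bigr => j _ do rewrite mulrDl.
  rewrite big_split /= addrC; congr (_ + _).
  have -> : q.2 = nth d B k by rewrite /= nth_index.
  rewrite -(sum_delta k (fun j => q.1 * ((nth d B j) c)%:R)).
  by apply: eq_bigr => j _; case: (j == k); rewrite ?mul0r.
Qed.

End Cancel.

Lemma cancel_np (K : fieldType) m (q1 q2 r1 r2 : series K m) :
  ser_nonzero q2 -> incl_np q1 q2 ->
  (forall c, ser_mul q1 r2 c = ser_mul r1 q2 c) -> incl_np r1 r2.
Proof.
move=> nq2 Hq E x Rx.
have [B [BS CB]] := basis_ex (supp q2).
pose d : mon m := [ffun=> 0%N].
have n0 : (0 < size B)%N.
  case: nq2 => c qc; have [p pB _] := CB c qc.
  by rewrite lt0n size_eq0; apply/eqP => B0; rewrite B0 in pB.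
have step : forall i : 'I_(size B), exists my : ('I_(size B) -> R) * vec m,
   [/\ forall j, 0 <= my.1 j, \sum_j my.1 j = 1, nwg (supp r2) 1 my.2 &
       forall c, \sum_j my.1 j * ((nth d B j) c)%:R + my.2 c <= (x c)%:R + ((nth d B i) c)%:R].
  move=> i; have bi : supp q2 (nth d B i) by apply: BS; apply: mem_nth.
  have h1 : nwg (supp (ser_mul r1 q2)) 1 (emb (madd x (nth d B i))).
    by apply: np_mul_hard; apply: nwg_single; exists x, (nth d B i).
  have h2 : nwg (supp (ser_mul q1 r2)) 1 (emb (madd x (nth d B i))).
    by apply: nwg_sub h1 => v; rewrite /supp E.
  have [za [zb [na nb le]]] := nwg_decomp (np_mul_easy h2).
  have na2 : nwg (supp q2) 1 za := nwg_comp Hq na.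
  have [mu [mu0 mu1 mu2]] := idx_weights d (nwg_basis (conj BS CB) na2).
  exists (mu, zb); split=> // c /=.
  apply: le_trans (lerD (mu2 c) (lexx _)) _; apply: le_trans (le c) _.
  by rewrite /emb ffunE natrD.
have [f Hf] := fin_all_exists step.
pose M i j := (f i).1 j.
have M0 : forall i j, 0 <= M i j by move=> i j; have [h _ _ _] := Hf i; apply: h.
have M1 : forall i, \sum_j M i j = 1 by move=> i; have [_ h _ _] := Hf i; apply: h.
have [pi [pi0 pi1 piM]] := stationary n0 M0 M1.
have Yk : forall k, nwg (supp r2) 1 (f k).2 by move=> k; have [_ _ h _] := Hf k; apply: h.
have Y := nwg_fam (index_enum 'I_(size B)) pi0 Yk.
rewrite pi1 in Y; apply: nwg_mono Y _ => c.
pose b j := (((nth d B j) c)%:R : R).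
have key : \sum_i pi i * (\sum_j M i j * b j + (f i).2 c) <= \sum_i pi i * ((x c)%:R + b i).
  apply: ler_sum => i _; apply: ler_wpM2l; first exact: pi0.
  by have [_ _ _ h] := Hf i; apply: h.
have e1 : \sum_i pi i * (\sum_j M i j * b j) = \sum_j pi j * b j.
  under eq_bigr => i _ do rewrite mulr_sumr.
  rewrite exchange_big /=; apply: eq_bigr => j _.
  by rewrite -piM mulr_suml; apply: eq_bigr => i _; rewrite mulrA.
have e2 : \sum_i pi i * (x c)%:R = (x c)%:R by rewrite -mulr_suml pi1 mul1r.
move: key; under eq_bigr => i _ do rewrite mulrDr.
under [X in _ <= X]eq_bigr => i _ do rewrite mulrDr.
rewrite !big_split /= e1 e2 /emb => key.
lra.
Qed.

Section Helpers.
Variables (K : fieldType) (m : nat).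
Implicit Types (f g : series K m).

Lemma nwg_lex (S : mon m -> Prop) (c : vec m) s x :
  (forall p, S p -> lexle c (emb p)) -> nwg S s x -> lexle (vscale s c) x.
Proof.
move=> H [l [Hl [<- H2]]].
apply: lexle_trans (le_lexle H2).
elim: l Hl {H2} => [|q l IH] Hl.
  left; apply: functional_extensionality => i; by rewrite /vscale !big_nil mul0r.
have [Sq q0] := Hl q (mem_head _ _).
have IH' : lexle (vscale (\sum_(q <- l) q.1) c) (fun i => \sum_(q <- l) q.1 * (q.2 i)%:R).
  by apply: IH => q' h; apply: Hl; rewrite inE h orbT.
have -> : vscale (\sum_(q' <- q :: l) q'.1) c = vadd (vscale q.1 c) (vscale (\sum_(q <- l) q.1) c).
  by apply: functional_extensionality => i; rewrite /vadd /vscale big_cons mulrDl.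
have -> : (fun i => \sum_(q' <- q :: l) q'.1 * (q'.2 i)%:R) =
    vadd (vscale q.1 (emb q.2)) (fun i => \sum_(q <- l) q.1 * (q.2 i)%:R).
  by apply: functional_extensionality => i; rewrite /vadd /vscale big_cons.
by apply: lexle_add => //; apply: lexle_scale => //; apply: H.
Qed.

Lemma incl_lex f g c : ser_nonzero g -> incl_np f g -> supp f c -> lexle (emb (lm g)) (emb c).
Proof.
move=> ng H fc; have := nwg_lex (c := emb (lm g)) (proj2 (lm_spec ng)) (H c fc).
suff -> : vscale 1 (emb (lm g)) = emb (lm g) by [].
by apply: functional_extensionality => i; rewrite /vscale mul1r.
Qed.

Variable i0 : 'I_m.
Hypothesis i00 : nat_of_ord i0 = 0%N.

Lemma lexle_first_nat (a b : mon m) : lexle (emb a) (emb b) -> (a i0 <= b i0)%N.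
Proof. by move=> /(lexle_first i00); rewrite /emb ler_nat. Qed.

Lemma lm_first f c : supp f c -> (lm f i0 <= c i0)%N.
Proof.
move=> fc; apply: lexle_first_nat; apply: (proj2 (lm_spec (ex_intro _ c fc))) fc.
Qed.

Lemma lm_mul_first f g : ser_nonzero f -> ser_nonzero g ->
  (lm (ser_mul f g) i0 <= lm f i0 + lm g i0)%N.
Proof.
move=> nf ng; rewrite -[X in (_ <= X)%N](ffunE (fun i => lm f i + lm g i)%N).
by apply: lexle_first_nat; rewrite -/(madd _ _) emb_madd; apply: lm_mul_le.
Qed.

End Helpers.

Section Ideal.
Variables (K : fieldType) (m' : nat).
Local Notation mm := m'.+2.
Local Notation fr := (Defs.frac K mm).
Definition i0 : 'I_mm := ord0.
Definition i1 : 'I_mm := Ordinal (isT : (1 < m'.+2)%N).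

Definition Icond (q : fr) := forall c, supp q.1 c -> (lm q.2 i0 < c i0)%N.
Definition Iset (q : fr) := in_circ q /\ Icond q.

Lemma one_nonzero : ser_nonzero (ser_one K mm).
Proof.
exists [ffun=> 0%N]; rewrite /ser_one.
case: forallP => [_|H]; first exact: oner_neq0.
by exfalso; apply: H => i; rewrite ffunE.
Qed.

Lemma Iset_ideal : is_ideal Iset.
Proof.
split.
- by move=> q [].
- move=> q r [/in_circ_char [wq iq] Iq] wr E.
  split; first by apply/in_circ_char; split=> //; apply: cancel_np wq iq E.
  move=> c rc.
  have nr1 : ser_nonzero r.1 by exists c.
  set u := madd (lm r.1) (lm q.2).
  have h : supp (ser_mul q.1 r.2) u.
    by rewrite /supp E /u lm_mul // mulf_neq0 //; [apply: (proj1 (lm_spec nr1))|apply: (proj1 (lm_spec wq))].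
  have [a [b [qa [rb e]]]] := supp_mul h.
  have h1 := Iq a qa.
  have h2 := lm_first (erefl : nat_of_ord i0 = 0%N) rb.
  have h3 := lm_first (erefl : nat_of_ord i0 = 0%N) rc.
  have h4 := congr1 (fun f : mon mm => f i0) e; rewrite /u /= !ffunE in h4.
  lia.
- split.
    by apply/in_circ_char; split; [apply: one_nonzero|move=> c; rewrite /supp /= eqxx].
  by move=> c; rewrite /supp /= eqxx.
- move=> q r [/in_circ_char [wq iq] Iq] [/in_circ_char [wr ir] Ir].
  have w : ser_nonzero (ser_mul q.2 r.2) := mul_nonzero wq wr.
  split; first by apply/in_circ_char; split=> //; exact: circ_add iq ir.
  have h3 := lm_mul_first (erefl : nat_of_ord i0 = 0%N) wq wr.
  move=> c /=; rewrite /supp /ser_add.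
  case: (eqVneq (ser_mul q.1 r.2 c) 0) => [e|ne] H.
    rewrite e add0r in H; have [a [b [ra [qb ->]]]] := supp_mul H.
    have h1 := Ir a ra; have h2 := lm_first (erefl : nat_of_ord i0 = 0%N) qb.
    rewrite ffunE; lia.
  have [a [b [qa [rb ->]]]] := supp_mul ne.
  have h1 := Iq a qa; have h2 := lm_first (erefl : nat_of_ord i0 = 0%N) rb.
  rewrite ffunE; lia.
- move=> a q /in_circ_char [wa ia] [/in_circ_char [wq iq] Iq].
  split; first by apply/in_circ_char; split; [exact: mul_nonzero wa wq|exact: circ_mul ia iq].
  move=> c /= /supp_mul [x [y [ax [qy ->]]]].
  have h1 := lexle_first_nat (erefl : nat_of_ord i0 = 0%N) (incl_lex wa ia ax).
  have h2 := Iq y qy; have h3 := lm_mul_first (erefl : nat_of_ord i0 = 0%N) wa wq.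
  rewrite ffunE; lia.
Qed.

End Ideal.

Section NFG.
Variables (K : fieldType) (m' : nat).
Local Notation mm := m'.+2.
Local Notation fr := (Defs.frac K mm).
Local Notation i0 := (i0 m').
Local Notation i1 := (i1 m').

Lemma i1_i0 : i1 != i0. Proof. by []. Qed.

Definition xv (M : nat) : vec mm := fun i => if i == i0 then 1 else if i == i1 then - (M%:R) else 0.

Definition Pfrac (P : fr) x := ser_nonzero P.2 /\ vge P.1 (vadd x (emb (lm P.2))).

Lemma vaddA (x y z : vec mm) : vadd (vadd x y) z = vadd x (vadd y z).
Proof. by apply: functional_extensionality => i; rewrite /vadd addrA. Qed.

Lemma vaddCA (x y z : vec mm) : vadd x (vadd y z) = vadd y (vadd x z).
Proof. by apply: functional_extensionality => i; rewrite /vadd addrCA. Qed.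

Lemma Pfrac_zero x : Pfrac (frac_zero K mm) x.
Proof. by split; [apply: one_nonzero|move=> c; rewrite /supp /= eqxx]. Qed.

Lemma Pfrac_add P Q x : Pfrac P x -> Pfrac Q x -> Pfrac (frac_add P Q) x.
Proof.
move=> [nP hP] [nQ hQ]; split; first exact: mul_nonzero.
have le : lexle (vadd x (emb (lm (ser_mul P.2 Q.2)))) (vadd x (vadd (emb (lm P.2)) (emb (lm Q.2)))).
  by apply: lexle_add; [left|apply: lm_mul_le].
apply: vge_add.
  by apply: vge_le (vge_mul hP (vge_lm nQ)); rewrite vaddA.
by apply: vge_le (vge_mul hQ (vge_lm nP)); rewrite vaddA [vadd (emb (lm Q.2)) _]vaddC.
Qed.

Lemma Pfrac_mul a g x : in_circ a -> Pfrac g x -> Pfrac (frac_mul a g) x.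
Proof.
move=> /in_circ_char [wa ia] [ng hg]; split; first exact: mul_nonzero.
have ha : vge a.1 (emb (lm a.2)) by move=> c ac; apply: incl_lex wa ia ac.
apply: vge_le (vge_mul ha hg).
by rewrite vaddCA; apply: lexle_add; [left|exact: lm_mul_le wa ng].
Qed.

Lemma Pfrac_gen g M : Iset g -> (lm g.2 i1 < M)%N -> Pfrac g (xv M).
Proof.
move=> [/in_circ_char [wg _] Ig] lt; split=> // c gc; right.
have h := Ig c gc.
case: (ltngtP (lm g.2 i0).+1 (c i0)) => [l|g'|e].
- exists i0; split=> [j|]; first by rewrite ltn0.
  by rewrite /vadd /xv eqxx /emb addrC natr1 ltr_nat.
- by move: g'; rewrite ltnS leqNgt h.
- exists i1; split=> [j|].
    rewrite ltnS leqn0 => /eqP j0; have -> : j = i0 by apply: val_inj.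
    by rewrite /vadd /xv eqxx /emb -e addrC natr1.
  rewrite /vadd /xv (negbTE i1_i0) eqxx /emb.
  have : (lm g.2 i1)%:R < M%:R :> R by rewrite ltr_nat.
  have : 0 <= (c i1)%:R :> R by apply: ler0n.
  lra.
Qed.

End NFG.

Theorem proposition2p22 (K : fieldType) (m : nat) :
  [pchar K]%R =i pred0 -> (1 < m)%N -> ~ circ_noetherian K m.
Proof.
move=> _; case: m => [|[|m']] // _ Hn.
have [n [gens [Hg Hcomb]]] := Hn _ (Iset_ideal K m').
pose M := (\max_(k < n) lm (gens k).2 (i1 m')).+1.
have HM : forall k, (lm (gens k).2 (i1 m') < M)%N.
  by move=> k; rewrite ltnS; exact: (@leq_bigmax _ (fun k => lm (gens k).2 (i1 m')) k).
pose N := M.+1.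
pose e0 : mon m'.+2 := [ffun i => (i == i0 m' : nat)].
pose eN : mon m'.+2 := [ffun i => if i == i1 m' then N else 0%N].
have e0N : e0 != eN by apply/eqP => /ffunP /(_ (i0 m')); rewrite !ffunE.
pose fN : series K m'.+2 := fun c => if c == e0 then 1 else 0.
pose gN : series K m'.+2 := fun c => (if c == e0 then 1 else 0) + (if c == eN then 1 else 0).
have g_e0 : gN e0 = 1 by rewrite /gN eqxx (negbTE e0N) addr0.
have g_eN : gN eN = 1 by rewrite /gN eqxx eq_sym (negbTE e0N) add0r.
have sf : forall c, supp fN c -> c = e0.
  by move=> c; rewrite /supp /fN; case: (eqVneq c e0) => [->|ne] //; rewrite eqxx.
have sg : forall c, supp gN c -> c = e0 \/ c = eN.
  move=> c; rewrite /supp /gN; case: (eqVneq c e0) => [->|ne]; first by left.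
  by case: (eqVneq c eN) => [->|ne']; [right|rewrite addr0 eqxx].
have ng : ser_nonzero gN by exists e0; rewrite g_e0 oner_neq0.
have lmg : (lm gN (i0 m') <= 0)%N.
  have sN : supp gN eN by rewrite /supp g_eN oner_neq0.
  by have := lm_first (erefl : nat_of_ord (i0 m') = 0%N) sN; rewrite ffunE.
have IqN : Iset (fN, gN).
  split.
    apply/in_circ_char; split=> //= c /sf ->; apply: nwg_single.
    by rewrite /supp g_e0 oner_neq0.
  move=> c /sf -> /=; rewrite ffunE eqxx /=; lia.
have [coef [Hc Heq]] := Hcomb _ IqN.
set F := foldr _ _ _ in Heq.
have PF : Pfrac F (xv M).
  rewrite /F; elim: (enum 'I_n) => [|k s IH] /=; first exact: Pfrac_zero.
  apply: Pfrac_add IH; apply: Pfrac_mul (Hc k) _; exact: Pfrac_gen (Hg k) (HM k).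
have [nF2 vF] := PF.
have fe0 : supp fN e0 by rewrite /supp /fN eqxx oner_neq0.
have lmf : lm fN = e0 by apply: sf; apply: (proj1 (lm_spec (ex_intro _ e0 fe0))).
set cs := madd e0 (lm F.2).
have h1 : ser_mul fN F.2 cs != 0.
  rewrite /cs -{1}lmf lm_mul //; last by exists e0.
  rewrite mulf_neq0 //; first by rewrite lmf.
  exact: (proj1 (lm_spec nF2)).
rewrite (Heq cs) in h1.
have [u [v [Fu [gv e]]]] := supp_mul h1.
have l1 := vF u Fu.
have l2 : lexle (emb eN) (emb v).
  case: (sg v gv) => ->; last by left.
  right; exists (i0 m'); split=> [j|]; first by rewrite ltn0.
  by rewrite /emb !ffunE /= ltr_nat.
have l3 : lexlt (emb cs) (vadd (vadd (xv M) (emb (lm F.2))) (emb eN)).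
  exists (i1 m'); split=> [j|].
    rewrite ltnS leqn0 => /eqP j0; have -> : j = i0 m' by apply: val_inj.
    by rewrite /cs /emb /vadd /xv !ffunE eqxx /= natrD addr0.
  rewrite /cs /emb /vadd /xv !ffunE eqxx /= /N -!natr1 add0n.
  lra.
have : lexlt (emb cs) (emb cs).
  apply: lexlt_le_trans l3 _; rewrite e emb_madd; exact: lexle_add l1 l2.
exact: lexlt_irr.
Qed.
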